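(* Let $n,k,l\ge1$ and let $\mathbf P:\mathbb R^{n\times k}\to\mathbb R^{n\times l}$ be a permutation equivariant polynomial map. Then $$\mathbf P(\mathbf X)=\sum_{\alpha\in\mathbb N^k,\ |\alpha|\le n}\mathbf b_\alpha\,\mathbf q_\alpha^T,$$ where $\mathbf b_\alpha=(\mathbf x_1^\alpha,\dots,\mathbf x_n^\alpha)^T\in\mathbb R^n$ and $\mathbf q_\alpha=(q_{\alpha,1},\dots,q_{\alpha,l})^T$ with each $q_{\alpha,j}=q_{\alpha,j}(s_1(\mathbf X),\dots,s_t(\mathbf X))$ a polynomial in the $t=\binom{n+k}{k}$ power-sum multi-symmetric polynomials $s_1,\dots,s_t$. Conversely, every polynomial map $\mathbf P$ of this form is permutation equivariant.
   Context: $\mathbf X=(\mathbf x_1,\dots,\mathbf x_n)^T\in\mathbb R^{n\times k}$ with rows $\mathbf x_i\in\mathbb R^k$; $S_n$ acts by $\sigma\cdot\mathbf X=(\mathbf x_{\sigma^{-1}(1)},\dots,\mathbf x_{\sigma^{-1}(n)})^T$, and $\mathbf P$ is permutation equivariant if $\mathbf P(\sigma\cdot\mathbf X)=\sigma\cdot\mathbf P(\mathbf X)$ for all $\sigma\in S_n$. For $\mathbf x\in\mathbb R^k$ and a multi-index $\alpha=(\alpha_1,\dots,\alpha_k)\in\mathbb N^k$, $\mathbf x^\alpha=x_1^{\alpha_1}\cdots x_k^{\alpha_k}$ and $|\alpha|=\sum_i\alpha_i$. Let $\alpha_1,\dots,\alpha_t$ enumerate all multi-indices $\alpha\in\mathbb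 N^k$ with $|\alpha|\le n$ (there are $t=\binom{n+k}{k}$ of them); the power-sum multi-symmetric polynomials are $s_j(\mathbf X)=\sum_{i=1}^n\mathbf x_i^{\alpha_j}$, $j\in[t]$. *)

(* Defs.v *)
From HB Require Import structures.
From mathcomp Require Import all_boot all_order all_algebra all_fingroup.
From mathcomp Require Import reals.
From mathcomp.multinomials Require Import mpoly.

Set Implicit Arguments.
Unset Strict Implicit.
Unset Printing Implicit Defensive.

Import Order.TTheory GRing.Theory Num.Theory.
Local Open Scope ring_scope.

Section Defs.
Variables (R : realType) (n k l : nat).

Definition perm_rows (m : nat) (s : 'S_n) (X : 'M[R]_(n, m)) : 'M[R]_(n, m) :=
  \matrix_(i, j) X ((s^-1)%g i) j.

Definition perm_equivariant (P : 'M[R]_(n, k) -> 'M[R]_(n, l)) : Prop :=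
  forall (s : 'S_n) (X : 'M[R]_(n, k)), P (perm_rows s X) = perm_rows s (P X).

Definition is_polymap (P : 'M[R]_(n, k) -> 'M[R]_(n, l)) : Prop :=
  exists p : 'I_n -> 'I_l -> {mpoly R[n * k]},
    forall (X : 'M[R]_(n, k)) (i : 'I_n) (j : 'I_l),
      P X i j = (p i j).@[fun m => mxvec X 0 m].

(* multi-indices alpha in N^k with |alpha| <= n *)
Definition midx := 'X_{1..k < n.+1}.

(* t = binom(n+k, k) = number of such multi-indices *)
Definition t := #|{: midx}|.

Definition mon (alpha : 'X_{1..k}) (x : 'rV[R]_k) : R :=
  \prod_(c < k) x 0 c ^+ alpha c.

Definition powersum (alpha : midx) (X : 'M[R]_(n, k)) : R :=
  \sum_(i < n) mon alpha (row i X).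

Definition powersums (X : 'M[R]_(n, k)) : 'I_t -> R :=
  fun j => powersum (enum_val j) X.

Definition bvec (alpha : midx) (X : 'M[R]_(n, k)) : 'cV[R]_n :=
  \col_i mon alpha (row i X).

Definition qvec (q : midx -> 'I_l -> {mpoly R[t]}) (alpha : midx)
    (X : 'M[R]_(n, k)) : 'cV[R]_l :=
  \col_j (q alpha j).@[powersums X].

Definition has_powersum_form (P : 'M[R]_(n, k) -> 'M[R]_(n, l)) : Prop :=
  exists q : midx -> 'I_l -> {mpoly R[t]},
    forall X : 'M[R]_(n, k),
      P X = \sum_(alpha : midx) bvec alpha X *m (qvec q alpha X)^T.

End Defs.

(* Main.v *)
Require Import Defs.
From HB Require Import structures.
From mathcomp Require Import all_boot all_order all_algebra all_fingroup.
From mathcomp Require Import reals.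
From mathcomp.multinomials Require Import mpoly.
From mathcomp Require Import ring.

Set Implicit Arguments.
Unset Strict Implicit.
Unset Printing Implicit Defensive.
Import Order.TTheory GRing.Theory Num.Theory.
Local Open Scope ring_scope.

Section Main.
Variables (R : realType) (n' k : nat).
Local Notation n := n'.+1.
Local Notation M := 'M[R]_(n, k).
Local Notation o := (@ord0 n').

Lemma row_perm (s : 'S_n) (X : M) i : row i (perm_rows s X) = row ((s^-1)%g i) X.
Proof. by apply/rowP => j; rewrite !mxE. Qed.

Lemma mon0 (x : 'rV[R]_k) : mon 0%MM x = 1.
Proof. by rewrite /mon big1 // => c _; rewrite mnm0E expr0. Qed.

Lemma monD (a b : 'X_{1..k}) (x : 'rV[R]_k) : mon (a + b)%MM x = mon a x * mon b x.
Proof. by rewrite /mon -big_split; apply: eq_bigr => c _; rewrite mnmDE exprD. Qed.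

Lemma monU c (x : 'rV[R]_k) : mon U_(c)%MM x = x 0 c.
Proof.
rewrite /mon (bigD1 c) //= mnm1E eqxx expr1 big1 ?mulr1 // => c' hc'.
by rewrite mnm1E eq_sym (negbTE hc') expr0.
Qed.

Lemma powersum_perm (a : midx n k) s (X : M) : powersum a (perm_rows s X) = powersum a X.
Proof.
rewrite /powersum (reindex_inj (@perm_inj _ s)) /=.
by apply: eq_bigr => i _; rewrite row_perm permK.
Qed.

Lemma meval_ps_perm (q : {mpoly R[t n k]}) s (X : M) :
  q.@[powersums (perm_rows s X)] = q.@[powersums X].
Proof. by apply: meval_eq => j; rewrite /powersums powersum_perm. Qed.


Definition PSf (f : M -> R) :=
  exists q : {mpoly R[t n k]}, forall X, f X = q.@[powersums X].

Lemma PSfC c : PSf (fun _ => c).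
Proof. by exists c%:MP => X; rewrite mevalC. Qed.

Lemma PSfD f g : PSf f -> PSf g -> PSf (fun X => f X + g X).
Proof. by move=> [p hp] [q hq]; exists (p + q) => X; rewrite mevalD hp hq. Qed.

Lemma PSfM f g : PSf f -> PSf g -> PSf (fun X => f X * g X).
Proof. by move=> [p hp] [q hq]; exists (p * q) => X; rewrite mevalM hp hq. Qed.

Lemma PSfE f g : PSf f -> (forall X, f X = g X) -> PSf g.
Proof. by move=> [p hp] e; exists p => X; rewrite -e. Qed.

Lemma PSf_ps (a : midx n k) : PSf (powersum a).
Proof.
exists 'X_(enum_rank a) => X.
by rewrite mevalXU /powersums enum_rankK.
Qed.

Lemma PSf_sum (I : Type) (s : seq I) (P : pred I) (F : I -> M -> R) :
  (forall i, P i -> PSf (F i)) -> PSf (fun X => \sum_(i <- s | P i) F i X).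
Proof.
move=> h; elim: s => [|i s IH].
  by apply: PSfE (PSfC 0) _ => X; rewrite big_nil.
case Pi: (P i).
  by apply: PSfE (PSfD (h i Pi) IH) _ => X; rewrite big_cons Pi.
by apply: PSfE IH _ => X; rewrite big_cons Pi.
Qed.

Lemma PSf_perm f s X : PSf f -> f (perm_rows s X) = f X.
Proof. by move=> [q hq]; rewrite !hq meval_ps_perm. Qed.

Inductive Lin (d : nat) : (M -> R) -> Prop :=
| Lin0 : Lin d (fun _ => 0)
| LinT (a : 'X_{1..k}) (q : {mpoly R[t n k]}) : (mdeg a < d)%N ->
    Lin d (fun X => mon a (row o X) * q.@[powersums X])
| LinD f g : Lin d f -> Lin d g -> Lin d (fun X => f X + g X)
| LinE f g : Lin d f -> (forall X, f X = g X) -> Lin d g.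

Lemma Lin_PSmul d f h : Lin d f -> PSf h -> Lin d (fun X => f X * h X).
Proof.
move=> Lf [q hq]; elim: Lf => [|a p ha|f1 f2 _ IH1 _ IH2|f1 f2 _ IH e].
- by apply: LinE (Lin0 d) _ => X; rewrite mul0r.
- apply: LinE (LinT (p * q) ha) _ => X.
  by rewrite hq mevalM mulrA.
- by apply: LinE (LinD IH1 IH2) _ => X; rewrite mulrDl.
- by apply: LinE IH _ => X; rewrite e.
Qed.

Lemma Lin_mono d d' f : (d <= d')%N -> Lin d f -> Lin d' f.
Proof.
move=> hd; elim => [|a q ha|f1 f2 _ IH1 _ IH2|f1 f2 _ IH e].
- exact: Lin0.
- by apply: LinT; apply: leq_trans hd.
- exact: LinD.
- exact: LinE IH e.
Qed.

Lemma Lin_X d f c : Lin d f -> Lin d.+1 (fun X => X o c * f X).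
Proof.
elim => [|a q ha|f1 f2 _ IH1 _ IH2|f1 f2 _ IH e].
- by apply: LinE (Lin0 _) _ => X; rewrite mulr0.
- have hd : (mdeg (a + U_(c))%MM < d.+1)%N by rewrite mdegD mdeg1 addn1.
  apply: LinE (LinT q hd) _ => X.
  by rewrite monD monU mxE mulrA [_ * X o c]mulrC.
- by apply: LinE (LinD IH1 IH2) _ => X; rewrite mulrDr.
- by apply: LinE IH _ => X; rewrite e.
Qed.

Lemma LinN d f : Lin d f -> Lin d (fun X => - f X).
Proof.
move=> Lf; apply: LinE (Lin_PSmul Lf (PSfC (-1))) _ => X.
by rewrite mulrN1.
Qed.

Lemma Lin_sum (f : M -> R) : Lin n.+1 f ->
  exists qs : midx n k -> {mpoly R[t n k]},
    forall X, f X = \sum_(a : midx n k) mon a (row o X) * (qs a).@[powersums X].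
Proof.
elim => [|a q ha|f1 f2 _ [q1 h1] _ [q2 h2]|f1 f2 _ [q h] e].
- by exists (fun _ => 0) => X; rewrite big1 // => a _; rewrite meval0 mulr0.
- exists (fun b => if b == BMultinom ha then q else 0) => X.
  rewrite (bigD1 (BMultinom ha)) //= eqxx big1 ?addr0 // => b hb.
  by rewrite (negbTE hb) meval0 mulr0.
- exists (fun a => q1 a + q2 a) => X.
  by rewrite h1 h2 -big_split; apply: eq_bigr => a _; rewrite mevalD mulrDr.
- by exists q => X; rewrite -e h.
Qed.


Fixpoint InjF (A : {set 'I_n}) (fs : seq ('I_n -> R)) : R :=
  match fs with
  | [::] => 1
  | f :: fs' => \sum_(m | m \notin A) f m * InjF (m |: A) fs'
  end.

Lemma InjF_zero (fs : seq ('I_n -> R)) (A : {set 'I_n}) : (size fs + #|A| = n)%N -> o \notin A ->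
  (forall f, List.In f fs -> f o = 0) -> InjF A fs = 0.
Proof.
elim: fs A => [|f fs IH] A /= hs hA hf.
  have: (#|A| < n)%N.
    rewrite -[in X in (_ < X)%N](card_ord n) -(cardsC A) -[X in (X < _)%N]addn0 ltn_add2l card_gt0.
    by apply/set0Pn; exists o; rewrite in_setC.
  by move: hs; rewrite add0n => ->; rewrite ltnn.
apply: big1 => m hm; case: (m =P o) => [->|hmo].
  by rewrite hf /= ?mul0r; [|left].
rewrite IH ?mulr0 //.
- by rewrite cardsU1 hm; apply: etrans hs; rewrite addnA addn1.
- by rewrite in_setU1 negb_or hA andbT; apply/eqP => e; apply: hmo.
- by move=> g hg; apply: hf; right.
Qed.

Lemma InjF_lin pre post A (a : R) (f g : 'I_n -> R) :
  InjF A (pre ++ (fun m => a * f m - g m) :: post) =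
  a * InjF A (pre ++ f :: post) - InjF A (pre ++ g :: post).
Proof.
elim: pre A => [|h pre IH] A /=.
  rewrite mulr_sumr -sumrB; apply: eq_bigr => m _; ring.
rewrite mulr_sumr -sumrB; apply: eq_bigr => m _; rewrite IH; ring.
Qed.

Definition mono (X : M) (g : 'X_{1..k}) := fun m : 'I_n => mon g (row m X).
Definition dfun (X : M) (c : 'I_k) :=
  fun m => X o c * mono X 0%MM m - mono X U_(c)%MM m.
Definition InjM X A gs := InjF A (map (mono X) gs).

Fixpoint bumps (b : 'X_{1..k}) (gs : seq 'X_{1..k}) : seq (seq 'X_{1..k}) :=
  match gs with
  | [::] => [::]
  | g :: gs' => ((g + b)%MM :: gs') :: map (cons g) (bumps b gs')
  end.

Definition degsum (gs : seq 'X_{1..k}) := (\sum_(g <- gs) mdeg g)%N.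

Lemma bumps_prop b gs bs : bs \in bumps b gs ->
  size bs = size gs /\ degsum bs = (degsum gs + mdeg b)%N.
Proof.
elim: gs bs => [|g gs IH] bs //=; rewrite in_cons => /orP [/eqP ->|].
  by rewrite /degsum !big_cons mdegD /= addnAC.
case/mapP => bs' /IH [h1 h2] ->.
by rewrite /= h1 /degsum !big_cons -/(degsum _) h2 addnA.
Qed.

Lemma sum_swap (A : {set 'I_n}) (F : 'I_n -> 'I_n -> R) :
  \sum_(m | m \notin A) \sum_(m' | m' \notin m |: A) F m m' =
  \sum_(m' | m' \notin A) \sum_(m | m \notin m' |: A) F m m'.
Proof.
rewrite (exchange_big_dep (fun m' => m' \notin A)) /=; last first.
  by move=> m m' _; rewrite in_setU1 negb_or => /andP [].
apply: eq_bigr => m' hm'; apply: eq_bigl => m.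
rewrite !in_setU1 !negb_or; case: (m =P m') => [->|]; first by rewrite eqxx andbF.
move=> /eqP hne; by rewrite hm' andbT eq_sym hne /= andbT.
Qed.

Lemma InjM_rec (X : M) (b : 'X_{1..k}) (gs : seq 'X_{1..k}) (A : {set 'I_n}) :
  \sum_(m | m \notin A) mono X b m * InjM X (m |: A) gs =
  (\sum_(m | m \notin A) mono X b m) * InjM X A gs
  - \sum_(bs <- bumps b gs) InjM X A bs.
Proof.
elim: gs A => [|g gs IH] A.
  by rewrite /InjM /= big_nil subr0 mulr1; apply: eq_bigr => m _; rewrite mulr1.
have e : forall m', m' \notin A ->
  \sum_(m | m \notin m' |: A) mono X b m * (mono X g m' * InjM X (m |: (m' |: A)) gs)
  = mono X g m' * ((\sum_(m | m \notin A) mono X b m - mono X b m') * InjM X (m' |: A) gs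
      - \sum_(bs <- bumps b gs) InjM X (m' |: A) bs).
  move=> m' hm'.
  have -> : \sum_(m | m \notin m' |: A) mono X b m * (mono X g m' * InjM X (m |: (m' |: A)) gs)
     = mono X g m' * \sum_(m | m \notin m' |: A) mono X b m * InjM X (m |: (m' |: A)) gs.
    by rewrite mulr_sumr; apply: eq_bigr => m _; ring.
  rewrite IH; congr (_ * (_ * _ - _)).
  rewrite [in RHS](bigD1 m') //= addrAC subrr add0r.
  apply: eq_bigl => m; rewrite in_setU1 negb_or andbC.
  by congr (_ && _).
transitivity (\sum_(m' | m' \notin A) mono X g m' *
   ((\sum_(m | m \notin A) mono X b m - mono X b m') * InjM X (m' |: A) gs
      - \sum_(bs <- bumps b gs) InjM X (m' |: A) bs)).
  rewrite /InjM /= -/(InjM _ _ _).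
  under eq_bigr => m hm do rewrite mulr_sumr.
  rewrite sum_swap; apply: eq_bigr => m' hm'; rewrite -e //.
  by apply: eq_bigr => m _; rewrite setUCA.
rewrite /= big_cons big_map /InjM /= -!/(InjM _ _ _).
rewrite [X in _ - (_ + X)]exchange_big /=.
rewrite -big_split /= mulr_sumr -sumrB; apply: eq_bigr => m' hm'.
rewrite /mono monD -/(mono X g m') -/(mono X b m') -/(mono X g) -/(mono X b).
rewrite -mulr_sumr; ring.
Qed.



Lemma InjM_PS (gs : seq 'X_{1..k}) : (degsum gs <= n)%N ->
  PSf (fun X => InjM X set0 gs).
Proof.
move: {2}(size gs) (leqnn (size gs)) => s; elim: s gs => [|s IH] [|b gs] //= hs hd.
- by apply: PSfE (PSfC 1) _.
- by apply: PSfE (PSfC 1) _.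
have hb : (mdeg b < n.+1)%N.
  by move: hd; rewrite /degsum big_cons ltnS; apply: leq_trans; apply: leq_addr.
have hgs : (degsum gs <= n)%N.
  by move: hd; rewrite /degsum big_cons; apply: leq_trans; apply: leq_addl.
have e : forall X, (powersum (BMultinom hb) X) * InjM X set0 gs
   + (-1) * \sum_(bs <- bumps b gs | bs \in bumps b gs) InjM X set0 bs
   = InjM X set0 (b :: gs).
  move=> X; rewrite -big_seq mulN1r.
  rewrite [RHS]/InjM /= -/(InjM _ _ _) InjM_rec; congr (_ * _ - _).
  by rewrite /powersum; apply: eq_bigl => m; rewrite in_set0.
apply: PSfE e; apply: PSfD; first by apply: PSfM; [apply: PSf_ps|apply: IH].
apply: PSfM; first exact: PSfC.
apply: PSf_sum => bs /bumps_prop [h1 h2]; apply: IH; first by rewrite h1.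
by rewrite h2; move: hd; rewrite /degsum big_cons addnC.
Qed.

Lemma InjF_ones (X : M) r (A : {set 'I_n}) :
  InjF A (nseq r (mono X 0%MM)) = ((n - #|A|) ^_ r)%:R.
Proof.
elim: r A => [|r IH] A /=; first by rewrite ffactn0.
under eq_bigr => m hm do rewrite IH /mono mon0 mul1r cardsU1 hm.
rewrite sumr_const -mulrnA; congr (_%:R).
have -> : #|(fun i : 'I_n => i \notin A)| = (n - #|A|)%N.
  rewrite -[in X in _ = (X - _)%N](card_ord n) -(cardsC A) addKn.
  by apply: eq_card => m; rewrite !inE.
by rewrite ffactnS mulnC add1n subnS.
Qed.


Lemma degsum_cat s1 s2 : degsum (s1 ++ s2) = (degsum s1 + degsum s2)%N.
Proof. by rewrite /degsum big_cat. Qed.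

Lemma degsum_nseq0 r : degsum (nseq r 0%MM) = 0%N.
Proof. by rewrite /degsum big1_seq // => g /andP [_ /nseqP [-> _]]; rewrite mdeg0. Qed.

Lemma degsum_rcons s a : degsum (rcons s a) = (degsum s + mdeg a)%N.
Proof. by rewrite -cats1 degsum_cat /degsum big_seq1. Qed.

Lemma Lin_prodPS (cs : seq 'I_k) h : PSf h ->
  Lin (size cs).+1 (fun X => (\prod_(c <- cs) X o c) * h X).
Proof.
move=> hh; elim: cs => [|c cs IH] /=.
  case: hh => q hq; have h0 : (mdeg (0%MM : 'X_{1..k}) < 1)%N by rewrite mdeg0.
  by apply: LinE (LinT q h0) _ => X; rewrite mon0 big_nil hq.
by apply: LinE (Lin_X c IH) _ => X; rewrite big_cons mulrA.
Qed.

Lemma expand (cs : seq 'I_k) (pre : seq 'X_{1..k}) : (degsum pre + size cs <= n)%N ->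
  Lin (size cs) (fun X => InjF set0 (map (mono X) pre ++ map (dfun X) cs)
        - (\prod_(c <- cs) X o c) * InjM X set0 (pre ++ nseq (size cs) 0%MM)).
Proof.
elim: cs pre => [|c cs IH] pre hd.
  apply: LinE (Lin0 _) _ => X.
  by rewrite /= !cats0 big_nil mul1r /InjM subrr.
have e1 : forall X, InjF set0 (map (mono X) pre ++ map (dfun X) (c :: cs)) =
   X o c * InjF set0 (map (mono X) (rcons pre 0%MM) ++ map (dfun X) cs)
   - InjF set0 (map (mono X) (rcons pre U_(c)%MM) ++ map (dfun X) cs).
  by move=> X; rewrite !map_rcons -!cats1 -!catA /=; apply: InjF_lin.
have hd1 : (degsum (rcons pre 0%MM) + size cs <= n)%N.
  by rewrite degsum_rcons mdeg0 addn0; apply: leq_trans hd; rewrite leq_add2l.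
have hd2 : (degsum (rcons pre U_(c)%MM) + size cs <= n)%N.
  by rewrite degsum_rcons mdeg1 -addnA add1n.
have I2 := InjM_PS (gs := rcons pre U_(c)%MM ++ nseq (size cs) 0%MM).
have {I2} I2 : PSf (fun X => (-1) * InjM X set0 (rcons pre U_(c)%MM ++ nseq (size cs) 0%MM)).
  apply: PSfM; first exact: PSfC.
  by apply: I2; rewrite degsum_cat degsum_nseq0 addn0; apply: leq_trans hd2; apply: leq_addr.
have L := LinD (LinD (Lin_X c (IH _ hd1)) (Lin_mono (leqnSn _) (LinN (IH _ hd2))))
               (Lin_prodPS cs I2).
apply: LinE L _ => X /=.
rewrite e1 big_cons cat_rcons /=; ring.
Qed.

Lemma Kprime (cs : seq 'I_k) : size cs = n -> Lin n (fun X => \prod_(c <- cs) X o c).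
Proof.
move=> hs; have := expand (pre := [::]) (cs := cs).
rewrite /degsum big_nil add0n hs => /(_ (leqnn _)) L.
have N0 : (n ^_ n)%:R != 0 :> R by rewrite pnatr_eq0 -lt0n ffact_gt0.
apply: LinE (Lin_PSmul L (PSfC (- ((n ^_ n)%:R)^-1))) _ => X /=.
rewrite InjF_zero ?cards0 ?size_map ?hs ?addn0 ?inE //; last first.
  move=> f /List.in_map_iff [c [<- _]].
  by rewrite /dfun /mono mon0 monU mxE mulr1 subrr.
rewrite /InjM; change (0%MM :: nseq n' 0%MM) with (nseq n (0%MM : 'X_{1..k})).
rewrite map_nseq InjF_ones cards0 subn0.
by field.
Qed.


Lemma mon_list (a : 'X_{1..k}) : exists cs : seq 'I_k,
  size cs = mdeg a /\ forall x : 'rV[R]_k, mon a x = \prod_(c <- cs) x 0 c.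
Proof.
exists (flatten [seq nseq (a c) c | c <- enum 'I_k]); split.
  rewrite size_flatten /shape -map_comp sumnE big_map big_enum /= mdegE.
  by apply: eq_bigr => c _; rewrite size_nseq.
move=> x; rewrite big_flatten /= big_map big_enum /=.
by apply: eq_bigr => c _; rewrite big_nseq iter_mulr_1.
Qed.

Lemma Lin_Xc f c : Lin n.+1 f -> Lin n.+1 (fun X => X o c * f X).
Proof.
have key : forall (a : 'X_{1..k}) q, (mdeg a <= n)%N ->
    Lin n (fun X => mon a (row o X) * q.@[powersums X]).
  move=> a q ha; case: (ltngtP (mdeg a) n) => [hlt|//|heq].
  - by apply: LinT.
  - by move: ha; rewrite leqNgt => /negP.
  - have [cs [hs hm]] := mon_list a.
    rewrite heq in hs.
    have L := Lin_PSmul (Kprime hs) (h := fun X => q.@[powersums X]) (ex_intro _ q (fun X => erefl)).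
    by apply: LinE L _ => X; rewrite hm; congr (_ * _); apply: eq_bigr => c' _; rewrite mxE.
elim => [|a q ha|f1 f2 _ IH1 _ IH2|f1 f2 _ IH e].
- by apply: LinE (Lin0 _) _ => X; rewrite mulr0.
- exact: Lin_X (key a q ha).
- by apply: LinE (LinD IH1 IH2) _ => X; rewrite mulrDr.
- by apply: LinE IH _ => X; rewrite e.
Qed.

Lemma Lin_mon (a : 'X_{1..k}) f : Lin n.+1 f ->
  Lin n.+1 (fun X => mon a (row o X) * f X).
Proof.
move=> Lf; have [cs [_ hm]] := mon_list a.
suff : Lin n.+1 (fun X => (\prod_(c <- cs) X o c) * f X).
  by move=> L; apply: LinE L _ => X; rewrite hm; congr (_ * _); apply: eq_bigr => c _; rewrite mxE.
elim: cs {hm} => [|c cs IH].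
  by apply: LinE Lf _ => X; rewrite big_nil mul1r.
by apply: LinE (Lin_Xc c IH) _ => X; rewrite big_cons mulrA.
Qed.

Lemma Lin_mul f g : Lin n.+1 f -> Lin n.+1 g -> Lin n.+1 (fun X => f X * g X).
Proof.
move=> Lf Lg; elim: Lf => [|a q ha|f1 f2 _ IH1 _ IH2|f1 f2 _ IH e].
- by apply: LinE (Lin0 _) _ => X; rewrite mul0r.
- have L := Lin_mon a (Lin_PSmul Lg (h := fun X => q.@[powersums X]) (ex_intro _ q (fun X => erefl))).
  by apply: LinE L _ => X; rewrite /= [g X * _]mulrC mulrA.
- by apply: LinE (LinD IH1 IH2) _ => X; rewrite mulrDl.
- by apply: LinE IH _ => X; rewrite e.
Qed.

Lemma Lin1 : Lin n.+1 (fun _ => 1).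
Proof.
have h0 : (mdeg (0%MM : 'X_{1..k}) < n.+1)%N by rewrite mdeg0.
by apply: LinE (LinT 1 h0) _ => X; rewrite mon0 meval1 mulr1.
Qed.

Lemma PSf_psum (g : 'X_{1..k}) : PSf (fun X => \sum_(i < n) mon g (row i X)).
Proof.
have L : Lin n.+1 (fun X => mon g (row o X) * 1) := Lin_mon g Lin1.
have [qs hq] := Lin_sum L.
have e : forall X (i : 'I_n), mon g (row i X) =
    \sum_(a : midx n k) mon a (row i X) * (qs a).@[powersums X].
  move=> X i; have := hq (perm_rows (tperm o i) X).
  rewrite row_perm tpermV tpermL mulr1 => ->.
  by apply: eq_bigr => a _; rewrite meval_ps_perm.
have e2 : forall X, \sum_(a : midx n k) powersum a X * (qs a).@[powersums X]
   = \sum_(i < n) mon g (row i X).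
  move=> X; under [RHS]eq_bigr => i _ do rewrite e.
  rewrite exchange_big /=; apply: eq_bigr => a _.
  by rewrite /powersum mulr_suml.
apply: PSfE e2; apply: PSf_sum => a _; apply: PSfM; first exact: PSf_ps.
by exists (qs a).
Qed.


Inductive Rg (r : nat) : (M -> R) -> Prop :=
| RgC c : Rg r (fun _ => c)
| RgX (a : 'I_n) (c : 'I_k) : (a < r)%N -> Rg r (fun X => X a c)
| RgP (g : 'X_{1..k}) : Rg r (fun X => \sum_(i < n) mon g (row i X))
| RgD f g : Rg r f -> Rg r g -> Rg r (fun X => f X + g X)
| RgM f g : Rg r f -> Rg r g -> Rg r (fun X => f X * g X)
| RgE f g : Rg r f -> (forall X, f X = g X) -> Rg r g.

Lemma Rg_inv r f : Rg r f -> forall (s : 'S_n) X,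
  (forall a : 'I_n, (a < r)%N -> s a = a) -> f (perm_rows s X) = f X.
Proof.
move=> Rf s X hs; elim: Rf => [c|a c ha|g|f1 f2 _ IH1 _ IH2|f1 f2 _ IH1 _ IH2|f1 f2 _ IH e] //=.
- by rewrite mxE -{1}(hs a ha) permK.
- rewrite (reindex_inj (@perm_inj _ s)) /=.
  by apply: eq_bigr => i _; rewrite row_perm permK.
- by rewrite IH1 IH2.
- by rewrite IH1 IH2.
- by rewrite -!e.
Qed.

Lemma Rg_sum r (I : Type) (s : seq I) (P : pred I) (F : I -> M -> R) :
  (forall i, P i -> Rg r (F i)) -> Rg r (fun X => \sum_(i <- s | P i) F i X).
Proof.
move=> h; elim: s => [|i s IH].
  by apply: RgE (RgC r 0) _ => X; rewrite big_nil.
case Pi: (P i).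
  by apply: RgE (RgD (h i Pi) IH) _ => X; rewrite big_cons Pi.
by apply: RgE IH _ => X; rewrite big_cons Pi.
Qed.

Lemma Rg_prod r (I : Type) (s : seq I) (P : pred I) (F : I -> M -> R) :
  (forall i, P i -> Rg r (F i)) -> Rg r (fun X => \prod_(i <- s | P i) F i X).
Proof.
move=> h; elim: s => [|i s IH].
  by apply: RgE (RgC r 1) _ => X; rewrite big_nil.
case Pi: (P i).
  by apply: RgE (RgM (h i Pi) IH) _ => X; rewrite big_cons Pi.
by apply: RgE IH _ => X; rewrite big_cons Pi.
Qed.

Lemma Rg_exp r f e : Rg r f -> Rg r (fun X => f X ^+ e).
Proof.
move=> Rf; elim: e => [|e IH].
  by apply: RgE (RgC r 1) _ => X; rewrite expr0.
by apply: RgE (RgM Rf IH) _ => X; rewrite exprS.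
Qed.

Lemma Rg_mon r (a : 'I_n) (b : 'X_{1..k}) : (a < r)%N -> Rg r (fun X => mon b (row a X)).
Proof.
move=> ha; apply: Rg_prod => c _; apply: Rg_exp.
by apply: RgE (RgX c ha) _ => X; rewrite mxE.
Qed.

Inductive DecI (r : 'I_n) : (M -> R) -> Prop :=
| Dec0 : DecI r (fun _ => 0)
| DecT (b : 'X_{1..k}) c : Rg r c -> DecI r (fun X => mon b (row r X) * c X)
| DecD f g : DecI r f -> DecI r g -> DecI r (fun X => f X + g X)
| DecE f g : DecI r f -> (forall X, f X = g X) -> DecI r g.

Lemma Dec_mulT (r : 'I_n) f b c : Rg r c -> DecI r f ->
  DecI r (fun X => mon b (row r X) * c X * f X).
Proof.
move=> Rc; elim => [|b' c' Rc'|f1 f2 _ IH1 _ IH2|f1 f2 _ IH e].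
- by apply: DecE (Dec0 r) _ => X; rewrite mulr0.
- apply: DecE (DecT (b + b')%MM (RgM Rc Rc')) _ => X.
  rewrite monD; ring.
- by apply: DecE (DecD IH1 IH2) _ => X; rewrite mulrDr.
- by apply: DecE IH _ => X; rewrite e.
Qed.

Lemma Dec_mul (r : 'I_n) f g : DecI r f -> DecI r g -> DecI r (fun X => f X * g X).
Proof.
move=> Df Dg; elim: Df => [|b c Rc|f1 f2 _ IH1 _ IH2|f1 f2 _ IH e].
- by apply: DecE (Dec0 r) _ => X; rewrite mul0r.
- exact: Dec_mulT.
- by apply: DecE (DecD IH1 IH2) _ => X; rewrite mulrDl.
- by apply: DecE IH _ => X; rewrite e.
Qed.

Lemma Rg_Dec (r : 'I_n) f : Rg r.+1 f -> DecI r f.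
Proof.
elim => [c|a c ha|g|f1 f2 _ IH1 _ IH2|f1 f2 _ IH1 _ IH2|f1 f2 _ IH e].
- by apply: DecE (DecT 0%MM (RgC r c)) _ => X; rewrite mon0 mul1r.
- case: (ltngtP a r) => [hlt|hgt|heq].
  + by apply: DecE (DecT 0%MM (RgX c hlt)) _ => X; rewrite mon0 mul1r.
  + by move: ha; rewrite ltnS leqNgt hgt.
  + have -> : a = r by apply: val_inj.
    by apply: DecE (DecT U_(c)%MM (RgC r 1)) _ => X; rewrite monU mxE mulr1.
- by apply: DecE (DecT 0%MM (RgP r g)) _ => X; rewrite mon0 mul1r.
- exact: DecD.
- exact: Dec_mul.
- exact: DecE IH e.
Qed.

Lemma tperm_fix (r : 'I_n) (m a : 'I_n) : (r <= m)%N -> (a < r)%N -> tperm r m a = a.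
Proof.
move=> hm ha; apply: tpermD.
- by apply/eqP => e; move: ha; rewrite e ltnn.
- by apply/eqP => e; move: ha; rewrite -e ltnNge hm.
Qed.

Lemma Avg (r : 'I_n) f : DecI r f ->
  Rg r (fun X => \sum_(m : 'I_n | (r <= m)%N) f (perm_rows (tperm r m) X)).
Proof.
elim => [|b c Rc|f1 f2 _ IH1 _ IH2|f1 f2 _ IH e].
- by apply: RgE (RgC r 0) _ => X; rewrite big1.
- have S : Rg r (fun X => \sum_(m : 'I_n | ~~ (r <= m)%N) mon b (row m X)).
    by apply: Rg_sum => m hm; apply: Rg_mon; rewrite ltnNge.
  have L := RgM Rc (RgD (RgP r b) (RgM (RgC r (-1)) S)).
  apply: RgE L _ => X.
  rewrite (bigID (fun m : 'I_n => (r <= m)%N)) /= mulN1r addrK mulr_sumr.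
  apply: eq_bigr => m hm.
  rewrite row_perm tpermV tpermL (Rg_inv Rc); first by rewrite mulrC.
  by move=> a ha; apply: tperm_fix.
- by apply: RgE (RgD IH1 IH2) _ => X; rewrite big_split.
- by apply: RgE IH _ => X; apply: eq_bigr => m _; rewrite e.
Qed.


Definition inv (r : nat) (f : M -> R) := forall (s : 'S_n) X,
  (forall a : 'I_n, (a < r)%N -> s a = a) -> f (perm_rows s X) = f X.

Lemma descent (r : 'I_n) f : inv r f -> Rg r.+1 f -> Rg r f.
Proof.
move=> hinv Rf; have A := Avg (Rg_Dec Rf).
set N := \sum_(m : 'I_n | (r <= m)%N) (1 : R).
have N0 : N != 0.
  rewrite /N sumr_const pnatr_eq0 -lt0n; apply/card_gt0P; exists r.
  by rewrite unfold_in /= subnn.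
apply: RgE (RgM A (RgC r N^-1)) _ => X /=.
have -> : \sum_(m : 'I_n | (r <= m)%N) f (perm_rows (tperm r m) X) = f X * N.
  rewrite /N mulr_sumr; apply: eq_bigr => m hm; rewrite mulr1 hinv //.
  by move=> a ha; apply: tperm_fix.
by rewrite -mulrA mulfV // mulr1.
Qed.

Lemma Rg_poly (q : {mpoly R[n * k]}) : Rg n (fun X => q.@[fun m => mxvec X 0 m]).
Proof.
have Rv : forall m : 'I_(n * k), Rg n (fun X : M => mxvec X 0 m).
  move=> m; case: (mxvec_indexP m) => a c.
  by apply: RgE (RgX c (ltn_ord a)) _ => X; rewrite mxvecE.
have e : forall X, \sum_(m <- msupp q) q@_m * \prod_i (mxvec X 0 i) ^+ m i
   = q.@[fun m => mxvec X 0 m] by move=> X; rewrite mevalE.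
apply: RgE e; apply: Rg_sum => m _; apply: RgM; first exact: RgC.
by apply: Rg_prod => i _; apply: Rg_exp.
Qed.

Lemma Rg1_Lin f : Rg 1 f -> Lin n.+1 f.
Proof.
have h0 : (mdeg (0%MM : 'X_{1..k}) < n.+1)%N by rewrite mdeg0.
elim => [c|a c ha|g|f1 f2 _ IH1 _ IH2|f1 f2 _ IH1 _ IH2|f1 f2 _ IH e].
- by apply: LinE (LinT c%:MP h0) _ => X; rewrite mon0 mevalC mul1r.
- have -> : a = o by apply: val_inj => /=; move: ha; rewrite ltnS leqn0 => /eqP.
  by apply: LinE (Lin_Xc c Lin1) _ => X; rewrite mulr1.
- have [q hq] := PSf_psum g.
  by apply: LinE (LinT q h0) _ => X; rewrite mon0 mul1r hq.
- exact: LinD.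
- exact: Lin_mul.
- exact: LinE IH e.
Qed.

Lemma forward_j (l : nat) (P : M -> 'M[R]_(n, l)) (j : 'I_l)
  (p : 'I_n -> 'I_l -> {mpoly R[n * k]})
  (hp : forall X i j, P X i j = (p i j).@[fun m => mxvec X 0 m])
  (heq : perm_equivariant P) :
  exists qs : midx n k -> {mpoly R[t n k]},
    forall X, P X o j = \sum_(a : midx n k) mon a (row o X) * (qs a).@[powersums X].
Proof.
set f := fun X => P X o j.
have hinv : forall r, (0 < r)%N -> inv r f.
  move=> r hr s X hs; rewrite /f heq mxE.
  by rewrite -{1}(hs o hr) permK.
have Rn : Rg n f by apply: RgE (Rg_poly (p o j)) _ => X; rewrite /f hp.
have D : forall d, (d <= n')%N -> Rg (n - d) f.
  elim => [|d IH] hd; first by rewrite subn0.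
  have hr : (n - d.+1 < n)%N by rewrite subSS ltnS leq_subr.
  have := descent (r := Ordinal hr) (f := f); apply.
    by apply: hinv => /=; rewrite subSS subn_gt0.
  by rewrite /= subSS -subSn ?(ltnW hd) //; apply: IH; apply: ltnW.
have := D n' (leqnn _); rewrite subSnn => R1.
exact: Lin_sum (Rg1_Lin R1).
Qed.

End Main.

Theorem theorem2 (R : realType) (n k l : nat)
    (hn : (1 <= n)%N) (hk : (1 <= k)%N) (hl : (1 <= l)%N)
    (P : 'M[R]_(n, k) -> 'M[R]_(n, l)) :
  (is_polymap P -> perm_equivariant P -> has_powersum_form P) /\
  (has_powersum_form P -> perm_equivariant P).
Proof.
case: n hn P => [//|n'] _ P; split.
- move=> [p hp] heq.
  have [Q hQ] := fin_all_exists (fun j => forward_j j hp heq).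
  exists (fun a j => Q j a) => X; apply/matrixP => i j.
  rewrite summxE.
  have := heq (tperm ord0 i) X.
  move/(congr1 (fun A : 'M_(n'.+1, l) => A ord0 j)).
  rewrite mxE tpermV tpermL => <-.
  rewrite hQ; apply: eq_bigr => a _.
  rewrite !mxE big_ord1 !mxE row_perm tpermV tpermL meval_ps_perm.
  done.
- move=> [q hq] s X; apply/matrixP => i j.
  rewrite hq [RHS]mxE hq !summxE; apply: eq_bigr => a _.
  rewrite !mxE !big_ord1 !mxE row_perm meval_ps_perm.
  done.
Qed.
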